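(* For all $m,n\ge1$ with $n\ge\frac87\|[\Gamma]_{\underline m}^{-1}\|$ we have $\{8\sqrt m\,\|[\Xi]_{\underline m}\|\le1\}\subset\{[\widehat\Gamma]_{\underline m}\text{ is non-singular and }\|[\widehat\Gamma]_{\underline m}^{-1}\|\le n\}$.
   Context: $\mathbb H$ is a separable Hilbert space with orthonormal basis $\{\psi_j\}$; $[h]_{\underline m}=(\langle h,\psi_j\rangle)_{j\le m}$, $[T]_{\underline m}=(\langle\psi_j,T\psi_k\rangle)_{1\le j,k\le m}$; matrix norms are spectral norms; $[\mathrm I]_{\underline m}$ is the identity. $\Gamma$ is a strictly positive covariance operator of a centered $\mathbb H$-valued random element $X$ (so $[\Gamma]_{\underline m}$ is positive definite), $X_1,\dots,X_n$ are i.i.d. copies, $[\widehat\Gamma]_{\underline m}=n^{-1}\sum_i[X_i]_{\underline m}[X_i]_{\underline m}^t$, and $[\Xi]_{\underline m}:=[\Gamma]_{\underline m}^{-1/2}[\widehat\Gamma]_{\underline m}[\Gamma]_{\underline m}^{-1/2}-[\mathrm I]_{\underline m}$. *)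

(* Defs.v *)
From HB Require Import structures.
From mathcomp Require Import all_boot all_order all_algebra.
From mathcomp Require Import boolp classical_sets reals.
Set Implicit Arguments. Unset Strict Implicit. Unset Printing Implicit Defensive.
Import Order.TTheory GRing.Theory Num.Theory.
Local Open Scope ring_scope.
Local Open Scope classical_set_scope.

Section Defs.
Variable R : realType.

Definition vnorm k (v : 'cV[R]_k) : R := Num.sqrt (\sum_i v i 0 ^+ 2).

Definition specnorm p k (A : 'M[R]_(p, k)) : R :=
  sup [set vnorm (A *m v) | v in [set v : 'cV[R]_k | vnorm v <= 1]].

Definition posdef k (A : 'M[R]_k) : Prop :=
  A^T = A /\ forall v : 'cV[R]_k, v != 0 -> 0 < (v^T *m A *m v) 0 0.

Definition is_sqrt_inv k (G S : 'M[R]_k) : Prop :=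
  posdef S /\ S *m S = invmx G.

(* G^{-1/2}: the positive definite square root of the inverse of G
   (chosen via the choice operator of MathComp-Analysis; it exists and is
   unique when G is positive definite). *)
Definition msqrtinv k (G : 'M[R]_k) : 'M[R]_k := xget 0 [set S : 'M[R]_k | is_sqrt_inv G S].

Definition empcov k n (x : 'I_n -> 'cV[R]_k) : 'M[R]_k :=
  n%:R^-1 *: \sum_(i < n) (x i *m (x i)^T).

Definition Xi k (G Ghat : 'M[R]_k) : 'M[R]_k :=
  msqrtinv G *m Ghat *m msqrtinv G - 1%:M.

End Defs.

(* Main.v *)
Require Import Defs.
From HB Require Import structures.
From mathcomp Require Import all_boot all_order all_algebra.
From mathcomp Require Import boolp classical_sets reals.
From mathcomp Require Import ring lra.
Import Order.TTheory GRing.Theory Num.Theory.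
Local Open Scope ring_scope.

Section H.
Context {R : realType}.

Definition dot {k} (a b : 'cV[R]_k) : R := \sum_i a i 0 * b i 0.

Lemma dotC {k} (a b : 'cV[R]_k) : dot a b = dot b a.
Proof. by apply: eq_bigr => i _; rewrite mulrC. Qed.

Lemma dotE {k} (a b : 'cV[R]_k) : (a^T *m b) 0 0 = dot a b.
Proof. by rewrite mxE; apply: eq_bigr => i _; rewrite mxE. Qed.

Lemma dotDr {k} (a b c : 'cV[R]_k) : dot a (b + c) = dot a b + dot a c.
Proof. by rewrite /dot -big_split; apply: eq_bigr => i _; rewrite mxE mulrDr. Qed.

Lemma dotNl {k} (a b : 'cV[R]_k) : dot (- a) b = - dot a b.
Proof. by rewrite /dot -sumrN; apply: eq_bigr => i _; rewrite mxE mulNr. Qed.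

Lemma dotZl {k} c (a b : 'cV[R]_k) : dot (c *: a) b = c * dot a b.
Proof. by rewrite /dot mulr_sumr; apply: eq_bigr => i _; rewrite mxE mulrA. Qed.

Lemma dot0r {k} (a : 'cV[R]_k) : dot a 0 = 0.
Proof. by rewrite /dot big1 // => i _; rewrite mxE mulr0. Qed.

Lemma dot_ge0 {k} (a : 'cV[R]_k) : 0 <= dot a a.
Proof. by apply: sumr_ge0 => i _; rewrite -expr2 sqr_ge0. Qed.

Lemma vnormE {k} (a : 'cV[R]_k) : vnorm a = Num.sqrt (dot a a).
Proof. by rewrite /vnorm /dot; congr Num.sqrt; apply: eq_bigr => i _; rewrite expr2. Qed.

Lemma vnorm_ge0 {k} (a : 'cV[R]_k) : 0 <= vnorm a.
Proof. exact: sqrtr_ge0. Qed.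

Lemma vnorm_sq {k} (a : 'cV[R]_k) : vnorm a ^+ 2 = dot a a.
Proof. by rewrite vnormE sqr_sqrtr // dot_ge0. Qed.

Lemma dot_eq0 {k} (a : 'cV[R]_k) : dot a a = 0 -> a = 0.
Proof.
move=> /eqP; rewrite psumr_eq0 => [/allP H|i _]; last by rewrite -expr2 sqr_ge0.
apply/matrixP => i j; rewrite (ord1 j) mxE.
have := H i (mem_index_enum _); rewrite -expr2 sqrf_eq0 => /eqP //.
Qed.

Lemma vnorm_eq0 {k} {a : 'cV[R]_k} : vnorm a = 0 -> a = 0.
Proof. by move=> h; apply: dot_eq0; rewrite -vnorm_sq h expr0n. Qed.

Lemma vnormZ {k} c (a : 'cV[R]_k) : vnorm (c *: a) = `|c| * vnorm a.
Proof.
rewrite !vnormE dotZl dotC dotZl mulrA -expr2 sqrtrM ?sqr_ge0 //.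
by rewrite sqrtr_sqr.
Qed.

Lemma vnormN {k} (a : 'cV[R]_k) : vnorm (- a) = vnorm a.
Proof. by rewrite -scaleN1r vnormZ normrN normr1 mul1r. Qed.

Lemma cs {k} (a b : 'cV[R]_k) : dot a b <= vnorm a * vnorm b.
Proof.
set al := vnorm a; set be := vnorm b.
have h0 : 0 <= dot (be *: a - al *: b) (be *: a - al *: b) by apply: dot_ge0.
have e : dot (be *: a - al *: b) (be *: a - al *: b) =
  be^+2 * dot a a - 2 * al * be * dot a b + al^+2 * dot b b.
  rewrite dotDr !(dotC (be *: a - al *: b)) !dotDr !dotNl !dotZl.
  rewrite !(dotC _ (- (al *: b))) !(dotC _ (be *: a)) !dotNl !dotZl (dotC b a).
  ring.
rewrite e -!vnorm_sq -/al -/be in h0.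
have ha : 0 <= al by apply: vnorm_ge0.
have hb : 0 <= be by apply: vnorm_ge0.
have [al0|alp] := eqVneq al 0.
  have a0 : a = 0 := vnorm_eq0 al0. by rewrite al0 mul0r a0 dotC dot0r.
have [be0|bep] := eqVneq be 0.
  have b0 : b = 0 := vnorm_eq0 be0. by rewrite be0 mulr0 b0 dot0r.
have hab : 0 < al * be by rewrite mulr_gt0 // lt0r ?alp ?bep.
have : 2 * (al * be) * dot a b <= 2 * (al * be) * (al * be) by nra.
by rewrite ler_pM2l // mulr_gt0.
Qed.

Lemma csN {k} (a b : 'cV[R]_k) : - dot a b <= vnorm a * vnorm b.
Proof. by rewrite -dotNl -(vnormN a) cs. Qed.

Lemma mulmx_dot {p k} (A : 'M[R]_(p, k)) v i :
  (A *m v) i 0 = dot (\col_j A i j) v.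
Proof. by rewrite mxE; apply: eq_bigr => j _; rewrite mxE. Qed.

Lemma sq_le (x c : R) : x <= c -> - x <= c -> x ^+ 2 <= c ^+ 2.
Proof. move=> h1 h2; nra. Qed.

Lemma mat_bound {p k} (A : 'M[R]_(p, k)) : exists C, 0 <= C /\
  forall v, vnorm (A *m v) <= C * vnorm v.
Proof.
exists (Num.sqrt (\sum_i vnorm (\col_j A i j) ^+ 2)); split; first exact: sqrtr_ge0.
move=> v; rewrite [X in X <= _]vnormE.
rewrite -(@ger0_norm _ (vnorm v)) ?vnorm_ge0 // -sqrtr_sqr -sqrtrM; last first.
  by apply: sumr_ge0 => i _; rewrite sqr_ge0.
apply: ler_wsqrtr; rewrite mulr_suml /dot; apply: ler_sum => i _.
rewrite -expr2 mulmx_dot -exprMn; apply: sq_le; [exact: cs | exact: csN].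
Qed.

Lemma has_sup_spec {p k} (A : 'M[R]_(p, k)) :
  has_sup [set vnorm (A *m v) | v in [set v : 'cV[R]_k | vnorm v <= 1]].
Proof.
have [C [C0 HC]] := mat_bound A.
split.
  exists (vnorm (A *m 0)), 0 => //=.
  by rewrite /vnorm big1 ?sqrtr0 // => i _; rewrite mxE expr0n.
exists C => y [v /= hv <-].
by apply: le_trans (HC v) _; rewrite -[leRHS]mulr1 ler_wpM2l.
Qed.

Lemma spec_ub {p k} (A : 'M[R]_(p, k)) v : vnorm v <= 1 -> vnorm (A *m v) <= specnorm A.
Proof. by move=> hv; apply: (sup_upper_bound (has_sup_spec A)); exists v. Qed.

Lemma vnorm0 {k} : vnorm (0 : 'cV[R]_k) = 0.
Proof. by rewrite /vnorm big1 ?sqrtr0 // => i _; rewrite mxE expr0n. Qed.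

Lemma spec_ge0 {p k} (A : 'M[R]_(p, k)) : 0 <= specnorm A.
Proof. by have := spec_ub A (0 : 'cV[R]_k); rewrite mulmx0 !vnorm0; apply; rewrite ler01. Qed.

Lemma spec_le {p k} (A : 'M[R]_(p, k)) v : vnorm (A *m v) <= specnorm A * vnorm v.
Proof.
have [->|v0] := eqVneq v 0; first by rewrite mulmx0 !vnorm0 mulr0.
have hv : 0 < vnorm v.
  rewrite lt0r vnorm_ge0 andbT; apply/eqP => /vnorm_eq0; exact/eqP.
have := spec_ub A ((vnorm v)^-1 *: v).
rewrite vnormZ ger0_norm ?invr_ge0 ?vnorm_ge0 // mulVf ?gt_eqF // lexx.
move=> /(_ isT); rewrite -scalemxAr vnormZ ger0_norm ?invr_ge0 ?vnorm_ge0 //.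
by rewrite ler_pdivrMl // mulrC.
Qed.

Lemma spec_min {p k} (A : 'M[R]_(p, k)) c : 0 <= c ->
  (forall v, vnorm (A *m v) <= c * vnorm v) -> specnorm A <= c.
Proof.
move=> c0 h; apply: ge_sup; first by case: (has_sup_spec A).
move=> y [v /= hv <-]; apply: le_trans (h v) _.
by rewrite -[leRHS]mulr1 ler_wpM2l.
Qed.

Lemma inj_unit {k} (A : 'M[R]_k) :
  (forall v : 'cV[R]_k, A *m v = 0 -> v = 0) -> A \in unitmx.
Proof.
move=> h; rewrite -unitmx_tr -row_free_unit; apply: (@inj_row_free _ k k) => v hv.
have : A *m v^T = 0 by rewrite -[A]trmxK -trmx_mul hv trmx0.
by move/h => /(congr1 trmx); rewrite trmxK trmx0.
Qed.

Lemma dotMl {k} (A : 'M[R]_k) a b : dot (A *m a) b = dot a (A^T *m b).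
Proof. by rewrite -!dotE trmx_mul mulmxA. Qed.

End H.

Theorem lemmaB5 (R : realType) (m n : nat) (hm : (1 <= m)%N) (hn : (1 <= n)%N)
  (G : 'M[R]_m) (hG : posdef G) (x : 'I_n -> 'cV[R]_m) :
  8%:R / 7%:R * specnorm (invmx G) <= n%:R ->
  8%:R * Num.sqrt m%:R * specnorm (Xi G (empcov x)) <= 1 ->
  empcov x \in unitmx /\ specnorm (invmx (empcov x)) <= n%:R.
Proof.
move=> hGinv hXi.
set Gh := empcov x in hXi *.
have hm1 : 1 <= Num.sqrt (m%:R : R).
  have : (1:R) <= m%:R by rewrite ler1n.
  by move/ler_wsqrtr; rewrite sqrtr1.

have hxi0 := spec_ge0 (Xi G Gh).
have [[S0 HS0]|nS] := pselect (exists S, is_sqrt_inv G S); last first.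
  have eS : msqrtinv G = 0.
    by apply: xgetPN => S HS; apply: nS; exists S.
  have eX : Xi G Gh = - 1%:M by rewrite /Xi eS mul0mx mulmx0 sub0r.
  exfalso.
  have e : vnorm (delta_mx (Ordinal hm) 0 : 'cV[R]_m) = 1.
    by rewrite vnormE -dotE trmx_delta mul_delta_mx mxE !eqxx sqrtr1.
  have := spec_ub (Xi G Gh) (delta_mx (Ordinal hm) 0 : 'cV[R]_m).
  rewrite e lexx eX mulNmx mul1mx vnormN e => /(_ isT) h1.
  rewrite eX in hXi; move: hXi h1; set s := specnorm _ => hXi h1.
  have : 8 * 1 * 1 <= 8 * Num.sqrt (m%:R : R) * s.
    apply: ler_pM => //; first by rewrite mulr_ge0 // sqrtr_ge0.
      by rewrite ler_pM2l.
  move=> h2; have := le_trans h2 hXi; lra.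
have [[ST Spd] SS] : is_sqrt_inv G (msqrtinv G) := xgetI 0 HS0.
set S := msqrtinv G in ST Spd SS hXi *.
set t := specnorm (invmx G) in hGinv *.
set xi := specnorm (Xi G Gh) in hXi hxi0 *.
have ht0 : 0 <= t := spec_ge0 _.
have hxi : 8 * xi <= 1.
  have : 8 * xi <= 8%:R * Num.sqrt m%:R * xi by nra.
  by move=> h; apply: le_trans h hXi.
have Su : S \in unitmx.
  apply: inj_unit => w hw; apply/eqP; apply/negPn/negP => /Spd.
  by rewrite -mulmxA dotE hw dot0r ltxx.
have key : forall v, vnorm v <= n%:R * vnorm (Gh *m v).
  move=> v.
  set w := invmx S *m v.
  have hw : S *m w = v by rewrite /w mulKVmx.
  have h1 : vnorm v ^+ 2 <= t * vnorm w ^+ 2.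
    rewrite vnorm_sq -hw dotMl ST mulmxA SS.
    apply: le_trans (cs _ _) _.
    have := spec_le (invmx G) w; rewrite -/t => h.
    have := vnorm_ge0 w; nra.
  have hXw := spec_le (Xi G Gh) w; rewrite -/xi in hXw.
  have h2 : dot w (S *m (Gh *m v)) = dot w (Xi G Gh *m w) + dot w w.
    rewrite -dotDr /Xi -/S mulmxBl mul1mx subrK -hw !mulmxA.
    done.
  have h3 : dot w (S *m (Gh *m v)) <= vnorm v * vnorm (Gh *m v).
    by rewrite -{1}ST -dotMl hw cs.
  have h4 := csN w (Xi G Gh *m w).
  rewrite -vnorm_sq in h2.
  have := vnorm_ge0 w; have := vnorm_ge0 v; have := vnorm_ge0 (Gh *m v);
  have := vnorm_ge0 (Xi G Gh *m w).
  set a := vnorm v in h1 h3 *; set g := vnorm (Gh *m v) in h3 *;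
  set b := vnorm w in h1 h2 h4 hXw *;
  set c := vnorm (Xi G Gh *m w) in h4 hXw *.
  set d1 := dot w (S *m (Gh *m v)) in h2 h3.
  set d2 := dot w (Xi G Gh *m w) in h2 h4.
  move=> c0 g0 a0 b0.
  have hbc : b * c <= b * (xi * b) by rewrite ler_wpM2l.
  have h5 : 7 * b ^+ 2 <= 8 * (a * g) by nra.
  have h6 : a ^+ 2 <= n%:R * (a * g) by nra.
  have n0 : (0:R) <= n%:R by rewrite ler0n.
  rewrite leNgt; apply/negP => hlt.
  have ap : 0 < a by apply: le_lt_trans hlt; rewrite mulr_ge0.
  have : n%:R * g * a < a * a by rewrite ltr_pM2r.
  nra.
have Ghu : Gh \in unitmx.
  apply: inj_unit => v hv; apply: vnorm_eq0.
  by apply/le_anti; rewrite vnorm_ge0 andbT; have := key v; rewrite hv vnorm0 mulr0.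
split => //; apply: spec_min => // z.
by have := key (invmx Gh *m z); rewrite mulKVmx.
Qed.
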